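(* Let $\mu>0$, $L>0$, let $g:\mathbb{R}^n\to\mathbb{R}$ be $\mu$-strongly convex and $(L+\mu)$-smooth, let $h$ be proper closed convex, $\psi=g+h$, and run the ACG method (see context) from $x_0\in\mathbb{R}^n$. Then for every $j\ge0$, $$A_j\psi(y_j)\le\min_{u\in\mathbb{R}^n}\left\{A_j\Gamma_j(u)+\tfrac12\|u-x_0\|^2\right\}.$$
   Context: $\ell_g(u;x)=g(x)+\langle\nabla g(x),u-x\rangle$. ACG method: $A_0=0$, $\tau_0=1/L$, $y_0=x_0$; for $j\ge0$: $a_j=\frac{\tau_j+\sqrt{\tau_j^2+4\tau_jA_j}}{2}$, $\tau_{j+1}=\tau_j+\mu a_j/L$, $A_{j+1}=A_j+a_j$, $\tilde x_j=\frac{A_j}{A_{j+1}}y_j+\frac{a_j}{A_{j+1}}x_j$; $\tilde y_{j+1}=\mathrm{argmin}_u\{\ell_g(u;\tilde x_j)+h(u)+\frac{L+\mu}{2}\|u-\tilde x_j\|^2\}$; $y_{j+1}\in\mathrm{Argmin}\{\psi(u):u\in\{y_j,\tilde y_{j+1}\}\}$; $x_{j+1}=\frac{(L+\mu)a_j\tilde y_{j+1}-\frac{A_ja_jL}{A_{j+1}}y_j}{A_{j+1}\mu+1}$. Define $\tilde\gamma_j(u)=\ell_g(u;\tilde x_j)+h(u)+\frac\mu2\|u-\tilde x_j\|^2$, $\gamma_j(u)=\tilde\gamma_j(\tilde y_{j+1})+L\langle\tilde x_j-\tilde y_{j+1},u-\tilde y_{j+1}\rangle+\frac\mu2\|u-\tilde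 y_{j+1}\|^2$, $\Gamma_0\equiv0$, $\Gamma_{j+1}=(A_j\Gamma_j+a_j\gamma_j)/A_{j+1}$. The case $j=0$ reads $0\le\min_u\frac12\|u-x_0\|^2$. *)

(* Defs.v *)
From HB Require Import structures.
From mathcomp Require Import all_boot all_order all_algebra.
From mathcomp Require Import all_classical all_reals all_analysis.
Set Implicit Arguments. Unset Strict Implicit. Unset Printing Implicit Defensive.
Import Order.TTheory GRing.Theory Num.Theory.
Import numFieldNormedType.Exports.
Local Open Scope classical_set_scope.
Local Open Scope ring_scope.

Section Defs.
Context {R : realType} {n : nat}.
Notation V := 'rV[R]_n.

Definition dotv (u v : V) : R := \sum_(i < n) u ord0 i * v ord0 i.
Definition enorm (u : V) : R := Num.sqrt (dotv u u).

Definition is_gradient (g : V -> R) (dg : V -> V) : Prop :=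
  forall x, differentiable g x /\ forall v, 'd g x v = dotv (dg x) v.

Definition smooth_with (M : R) (g : V -> R) (dg : V -> V) : Prop :=
  is_gradient g dg /\ forall x y, enorm (dg x - dg y) <= M * enorm (x - y).

Definition strongly_convex (mu : R) (g : V -> R) : Prop :=
  forall (x y : V) (t : R), 0 <= t <= 1 ->
    g (t *: x + (1 - t) *: y)
      <= t * g x + (1 - t) * g y - mu / 2 * t * (1 - t) * enorm (x - y) ^+ 2.

Definition proper_fun (h : V -> \bar R) : Prop :=
  (forall x, h x != -oo%E) /\ (exists x, h x \is a fin_num).

Definition epigraph (h : V -> \bar R) : set (V * R) :=
  [set p | (h p.1 <= p.2%:E)%E].

Definition closed_fun (h : V -> \bar R) : Prop := closed (epigraph h).

Definition convex_fun (h : V -> \bar R) : Prop :=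
  forall (x y : V) (t : R), 0 <= t <= 1 ->
    (h (t *: x + (1 - t) *: y)%R <= (t%:E * h x + (1 - t)%:E * h y)%E)%E.

Definition lin (g : V -> R) (dg : V -> V) (x u : V) : R :=
  g x + dotv (dg x) (u - x).

End Defs.

(* Main.v *)
Require Import Defs.
From HB Require Import structures.
From mathcomp Require Import all_boot all_order all_algebra.
From mathcomp Require Import all_classical all_reals all_analysis.
From mathcomp Require Import ring lra.
Import Order.TTheory GRing.Theory Num.Theory.
Import numFieldNormedType.Exports.
Local Open Scope classical_set_scope.
Local Open Scope ring_scope.


Section Aux.
Context {R : realType} {n : nat}.
Notation V := 'rV[R]_n.

Lemma dotvE (u v : V) : dotv u v = \sum_(i < n) u ord0 i * v ord0 i.
Proof. by []. Qed.

Lemma dotv_ge0 (u : V) : 0 <= dotv u u.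
Proof. rewrite dotvE; apply: sumr_ge0 => i _; by rewrite -expr2 sqr_ge0. Qed.

Lemma enorm_sq (u : V) : enorm u ^+ 2 = dotv u u.
Proof. by rewrite /enorm sqr_sqrtr // dotv_ge0. Qed.

Lemma enorm_ge0 (u : V) : 0 <= enorm u.
Proof. exact: sqrtr_ge0. Qed.

Lemma cs2 (w v : V) (c : R) : 2 * c * dotv w v <= dotv w w + c ^+ 2 * dotv v v.
Proof.
rewrite -subr_ge0.
have -> : dotv w w + c ^+ 2 * dotv v v - 2 * c * dotv w v =
   \sum_(i < n) (w ord0 i - c * v ord0 i) ^+ 2.
  rewrite !dotvE !mulr_sumr -sumrN -!big_split /=.
  by apply: eq_bigr => i _; ring.
by apply: sumr_ge0 => i _; rewrite sqr_ge0.
Qed.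

Lemma lim0 (X Y Z : R) : (forall t, 0 < t <= 1 -> X <= Y + t * Z) -> X <= Y.
Proof.
move=> H.
case: (lerP X Y) => // hXY.
case: (lerP Z 0) => hZ.
  have h : X <= Y + 1 * Z by apply: H; rewrite ltr01 lexx.
  lra.
pose t := Num.min 1 ((X - Y) / (2 * Z)).
have tp : 0 < t by rewrite lt_min ltr01 /= divr_gt0 // ?subr_gt0 // mulr_gt0.
have t1 : t <= 1 by rewrite ge_min lexx.
have h : X <= Y + t * Z by apply: H; rewrite tp t1.
have h2 : t <= (X - Y) / (2 * Z) by rewrite ge_min lexx orbT.
have h3 : t * Z <= (X - Y) / 2.
  rewrite -(ler_pM2r hZ) in h2; apply: le_trans h2 _.
  have -> : (X - Y) / (2 * Z) * Z = (X - Y) / 2.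
    by field; rewrite gt_eqF.
  by [].
lra.
Qed.

Lemma lipdot (M s : R) (a b v : V) : 0 < M -> 0 < s -> enorm a <= M * enorm b ->
  dotv b b = s ^+ 2 * dotv v v -> dotv a v <= M * s * dotv v v.
Proof.
move=> hM hs hab hb.
have h1 : dotv a a <= M ^+ 2 * dotv b b.
  rewrite -!enorm_sq -exprMn; apply: ler_pM => //; exact: enorm_ge0.
have h2 := cs2 a v (M * s).
have hc : 0 < 2 * (M * s) by rewrite mulr_gt0 // mulr_gt0.
rewrite -(ler_pM2l hc).
have -> : 2 * (M * s) * (M * s * dotv v v) = M ^+ 2 * dotv b b + (M * s) ^+ 2 * dotv v v.
  by rewrite hb; ring.
rewrite mulrA; lra.
Qed.




End Aux.

Lemma line_derive (R : realType) n (g : 'rV[R]_n -> R) dg (x v : 'rV[R]_n) (s : R) :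
  is_gradient g dg ->
  is_derive s 1 (fun t : R => g (t *: v + x)) (dotv (dg (s *: v + x)) v).
Proof.
move=> Hg.
have [dg1 dg2] := Hg (s *: v + x).
have dl : is_diff s (fun t : R => t *: v + x) (fun t : R => t *: v).
  have -> : (fun t : R => t *: v) = (fun t : R => t *: v) + 0 by apply/funext => t; rewrite /= addr0.
  apply: is_diffD.
have dG : is_diff (s *: v + x) g ('d g (s *: v + x)).
  exact: DiffDef.
have dphi := is_diff_comp dl dG.
apply: DeriveDef.
  apply: diff_derivable. have := @ex_diff _ _ _ _ _ _ _ dphi; exact.
rewrite deriveE; last first.
  have := @ex_diff _ _ _ _ _ _ _ dphi; exact.
rewrite (@diff_val _ _ _ _ _ _ _ dphi) /=.
by rewrite scale1r dg2.
Qed.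

Lemma sc_lower (R : realType) n (mu M : R) (g : 'rV[R]_n -> R) dg x u : 0 < M ->
  strongly_convex mu g -> smooth_with M g dg ->
  g x + dotv (dg x) (u - x) + mu / 2 * enorm (u - x) ^+ 2 <= g u.
Proof.
move=> hM hsc [hgr hlip].
rewrite enorm_sq.
set v := u - x; set D := dotv (dg x) v; set N := dotv v v.
have hN : 0 <= N := dotv_ge0 v.
suff : D <= g u - g x - mu / 2 * N by lra.
apply: (@lim0 _ _ _ ((M + mu / 2) * N)) => t /andP[tp t1].
pose phi := fun s : R => g (s *: v + x).
have hder : forall s : R, is_derive s 1 phi (dotv (dg (s *: v + x)) v).
  by move=> s; apply: line_derive.
have hcont : {within `[0, t], continuous phi}.
  apply: derivable_within_continuous => s _.
  exact: ex_derive.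
have [xi /[!in_itv] /= /andP[xi0 xit] hmvt] := MVT tp (fun s _ => hder s) hcont.
have phi0 : phi 0 = g x by rewrite /phi scale0r add0r.
have hl : dotv (dg x - dg (xi *: v + x)) v <= M * xi * N.
  apply: (@lipdot _ _ M xi _ (x - (xi *: v + x))) => //.
  rewrite !dotvE mulr_sumr; apply: eq_bigr => i _; rewrite !mxE; ring.
have hlin : dotv (dg x - dg (xi *: v + x)) v = D - dotv (dg (xi *: v + x)) v.
  rewrite /D !dotvE -sumrB; apply: eq_bigr => i _; rewrite !mxE; ring.
have hs := hsc u x t; rewrite ltW //= t1 in hs; have {}hs := hs isT.
have hpt : t *: u + (1 - t) *: x = t *: v + x.
  by apply/rowP => i; rewrite !mxE; ring.
rewrite hpt enorm_sq -/v -/N in hs.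
change (g (t *: v + x)) with (phi t) in hs.
rewrite phi0 subr0 in hmvt.
have hxt : M * xi * N <= M * t * N.
  by apply: ler_wpM2r => //; apply: ler_wpM2l => //; apply: ltW.
set Dx := dotv (dg (xi *: v + x)) v in hmvt hlin.
have h4 : t * (D - Dx) <= t * (M * t * N) by apply: ler_wpM2l; [apply: ltW|lra].
rewrite -(ler_pM2l tp).
nra.
Qed.

Lemma qd (R : realType) (D c s : R) : is_derive s 1 (fun r : R => r * D + c * (r * r)) (D + c * (2 * s)).
Proof.
apply: is_derive_eq.
by rewrite scaler0 add0r /GRing.scale /=; ring.
Qed.

Lemma descent (R : realType) n (M : R) (g : 'rV[R]_n -> R) dg x u : 0 < M ->
  smooth_with M g dg ->
  g u <= g x + dotv (dg x) (u - x) + M / 2 * enorm (u - x) ^+ 2.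
Proof.
move=> hM [hgr hlip].
rewrite enorm_sq.
set v := u - x; set D := dotv (dg x) v; set N := dotv v v.
have hN : 0 <= N := dotv_ge0 v.
pose phi := fun s : R => g (s *: v + x).
pose k := fun s : R => phi s - (s * D + M / 2 * N * (s * s)).
have hder : forall s : R, is_derive s 1 k
    (dotv (dg (s *: v + x)) v - (D + M / 2 * N * (2 * s))).
  move=> s; rewrite /k.
  have h1 : is_derive s 1 phi (dotv (dg (s *: v + x)) v) by apply: line_derive.
  have h2 := @qd R D (M / 2 * N) s.
  exact: is_deriveB.
have hcont : {within `[0, 1], continuous k}.
  apply: derivable_within_continuous => s _.
  exact: ex_derive.
have [xi /[!in_itv] /= /andP[xi0 xi1] hmvt] := MVT ltr01 (fun s _ => hder s) hcont.
have hl : dotv (dg (xi *: v + x) - dg x) v <= M * xi * N.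
  apply: (@lipdot _ _ M xi _ ((xi *: v + x) - x)) => //.
  rewrite !dotvE mulr_sumr; apply: eq_bigr => i _; rewrite !mxE; ring.
have hlin : dotv (dg (xi *: v + x) - dg x) v = dotv (dg (xi *: v + x)) v - D.
  rewrite /D !dotvE -sumrB; apply: eq_bigr => i _; rewrite !mxE; ring.
have k0 : k 0 = g x by rewrite /k /phi scale0r add0r; ring.
have k1 : k 1 = g u - (D + M / 2 * N) by rewrite /k /phi scale1r /v subrK; ring.
rewrite k0 k1 subr0 mulr1 in hmvt.
lra.
Qed.

Ltac sumtac := rewrite ?dotvE; apply/eqP; rewrite -subr_eq0; apply/eqP;
  rewrite ?subr0; do 4!(rewrite ?mulrDr ?mulrN ?mulr_sumr -?sumrN -?big_split /=); rewrite big1; [by [] | move=> i _; rewrite ?mxE; field; try done].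

Lemma test_sumtac_unused (R : realType) n (a b c : 'rV[R]_n) (L : R) :
  - L / 2 * dotv (a - b) (a - b) + L * dotv (a - b) (c - b) + L / 2 * dotv (c - a) (c - a)
  - L / 2 * dotv (c - b) (c - b) = 0.
Proof. sumtac. Qed.

Lemma prox (R : realType) n (L mu : R) (g : 'rV[R]_n -> R) dg (h : 'rV[R]_n -> \bar R) (xt yt : 'rV[R]_n) :
  (forall x, h x != -oo%E) -> convex_fun h -> h yt \is a fin_num ->
  (forall u, ((lin g dg xt yt)%:E + h yt + ((L + mu) / 2 * enorm (yt - xt) ^+ 2)%:E
      <= (lin g dg xt u)%:E + h u + ((L + mu) / 2 * enorm (u - xt) ^+ 2)%:E)%E) ->
  forall u, ((lin g dg xt yt)%:E + h yt + (mu / 2 * enorm (yt - xt) ^+ 2)%:E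
      + (L * dotv (xt - yt) (u - yt) + mu / 2 * enorm (u - yt) ^+ 2)%:E
      <= (lin g dg xt u)%:E + h u + (mu / 2 * enorm (u - xt) ^+ 2)%:E)%E.
Proof.
move=> hninf hconv hfin hmin u.
have hmin' := hmin.
rewrite -(fineK hfin) in hmin' *; set hy := fine (h yt) in hmin' *.
case hu: (h u) => [r| |]; last by have := hninf u; rewrite hu.
  2: by rewrite addey // addye // leey.
rewrite -!EFinD lee_fin.
rewrite !enorm_sq.
set E := dotv (u - yt) (u - yt).
have hE : 0 <= E := dotv_ge0 _.
set M := L + mu.
suff : lin g dg xt yt + hy + M / 2 * dotv (yt - xt) (yt - xt) + M / 2 * E <=
       lin g dg xt u + r + M / 2 * dotv (u - xt) (u - xt).
  have : mu / 2 * dotv (yt - xt) (yt - xt) + L * dotv (xt - yt) (u - yt) + mu / 2 * E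
     - mu / 2 * dotv (u - xt) (u - xt) = M / 2 * dotv (yt - xt) (yt - xt) + M / 2 * E
     - M / 2 * dotv (u - xt) (u - xt).
    rewrite /E /M; sumtac.
  lra.
apply: (@lim0 _ _ _ (M / 2 * E)) => t /andP[tp t1].
pose w := t *: u + (1 - t) *: yt.
have hw := hconv u yt t; rewrite ltW //= t1 in hw; have {}hw := hw isT.
rewrite hu -(fineK hfin) -/hy -!EFinM -EFinD in hw.
have hm := hmin' w.
case hw' : (h w) hw hm => [rw| |]; last by have := hninf w; rewrite hw'.
  2: by rewrite leNgt ltey.
rewrite lee_fin => hw hm.
rewrite -!EFinD lee_fin !enorm_sq in hm.
have e1 : dotv (dg xt) (w - xt) = t * dotv (dg xt) (u - xt) + (1 - t) * dotv (dg xt) (yt - xt).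
  rewrite /w; sumtac.
have e2 : dotv (w - xt) (w - xt) = t * dotv (u - xt) (u - xt) + (1 - t) * dotv (yt - xt) (yt - xt) - t * (1 - t) * E.
  rewrite /w /E; sumtac.
move: hm; rewrite /lin e1 e2 => hm.
rewrite /lin.
rewrite -(ler_pM2l tp).
rewrite /M; lra.
Qed.

Lemma key (R : realType) n (A a L mu : R) (u y x yt xt xp : 'rV[R]_n) :
  0 <= A -> 0 < a -> 0 < mu -> 0 < L -> a ^+ 2 * L = (A + a) * (1 + mu * A) ->
  xt = (A / (A + a)) *: y + (a / (A + a)) *: x ->
  xp = ((A + a) * mu + 1)^-1 *: ((L + mu) * a *: yt - (A * a * L / (A + a)) *: y) ->
  (A + a) * (L / 2 * dotv (yt - xt) (yt - xt)) + (1 + mu * (A + a)) / 2 * dotv (u - xp) (u - xp)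
  <= A * (L * dotv (xt - yt) (y - yt) + mu / 2 * dotv (y - yt) (y - yt))
   + a * (L * dotv (xt - yt) (u - yt) + mu / 2 * dotv (u - yt) (u - yt))
   + (1 + mu * A) / 2 * dotv (u - x) (u - x).
Proof.
move=> hA ha hmu hL0 hL hxt hxp.
have hAa : 0 < A + a by lra.
have hL' : L = (A + a) * (1 + mu * A) / a ^+ 2.
  by rewrite -hL; field; rewrite gt_eqF.
rewrite -subr_ge0.
have -> : A * (L * dotv (xt - yt) (y - yt) + mu / 2 * dotv (y - yt) (y - yt))
   + a * (L * dotv (xt - yt) (u - yt) + mu / 2 * dotv (u - yt) (u - yt))
   + (1 + mu * A) / 2 * dotv (u - x) (u - x)
   - ((A + a) * (L / 2 * dotv (yt - xt) (yt - xt)) + (1 + mu * (A + a)) / 2 * dotv (u - xp) (u - xp))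
   = \sum_(i < n) ((A + a) * (L + mu) / 2 * ((A * y ord0 i + a * xp ord0 i) / (A + a) - yt ord0 i) ^+ 2
        + mu * A * a / (2 * (A + a)) * (xp ord0 i - y ord0 i) ^+ 2).
  rewrite hxp hxt hL'. clear hL hL'.
  sumtac.
  by apply/and4P; split; apply: lt0r_neq0; nra.
apply: sumr_ge0 => i _; apply: addr_ge0; apply: mulr_ge0; rewrite ?sqr_ge0 //.
  by apply: divr_ge0; [apply: mulr_ge0; lra | lra].
by apply: divr_ge0; [apply: mulr_ge0; [apply: mulr_ge0|]; lra | lra].
Qed.

Lemma a_facts (R : realType) (tau A a L mu : R) : 0 < L -> 0 < mu -> 0 <= A ->
  tau = (1 + mu * A) / L -> a = (tau + Num.sqrt (tau ^+ 2 + 4 * tau * A)) / 2 ->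
  0 < a /\ a ^+ 2 * L = (A + a) * (1 + mu * A).
Proof.
move=> hL hmu hA htau ha.
have hmA : 0 <= mu * A by apply: mulr_ge0 => //; apply: ltW.
have tp : 0 < tau by rewrite htau divr_gt0 //; lra.
set s := Num.sqrt _ in ha.
have hs0 : 0 <= s := sqrtr_ge0 _.
have hs : s ^+ 2 = tau ^+ 2 + 4 * tau * A.
  rewrite sqr_sqrtr // addr_ge0 ?sqr_ge0 // mulr_ge0 // mulr_ge0 //; lra.
split; first by rewrite ha; lra.
have e : a ^+ 2 = tau * a + tau * A.
  apply/eqP; rewrite -subr_eq0; apply/eqP.
  have -> : a ^+ 2 - (tau * a + tau * A) = (s ^+ 2 - (tau ^+ 2 + 4 * tau * A)) / 4.
    by rewrite ha; field.
  by rewrite hs subrr mul0r.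
by rewrite e htau; field; rewrite gt_eqF.
Qed.

Theorem lemma2p3 (R : realType) (n : nat) (mu L : R)
  (g : 'rV[R]_n -> R) (dg : 'rV[R]_n -> 'rV[R]_n) (h : 'rV[R]_n -> \bar R)
  (x0 : 'rV[R]_n)
  (A a tau : nat -> R) (x y xt yt : nat -> 'rV[R]_n) :
  0 < mu -> 0 < L ->
  strongly_convex mu g -> smooth_with (L + mu) g dg ->
  proper_fun h -> closed_fun h -> convex_fun h ->
  let psi := fun u => ((g u)%:E + h u)%E in
  (* ACG method *)
  A 0%N = 0 -> tau 0%N = 1 / L -> y 0%N = x0 -> x 0%N = x0 ->
  (forall j, a j = (tau j + Num.sqrt (tau j ^+ 2 + 4 * tau j * A j)) / 2) ->
  (forall j, tau j.+1 = tau j + mu * a j / L) ->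
  (forall j, A j.+1 = A j + a j) ->
  (forall j, xt j = (A j / A j.+1) *: y j + (a j / A j.+1) *: x j) ->
  (forall j u,
     ((lin g dg (xt j) (yt j.+1))%:E + h (yt j.+1)
        + ((L + mu) / 2 * enorm (yt j.+1 - xt j) ^+ 2)%:E
      <= (lin g dg (xt j) u)%:E + h u
        + ((L + mu) / 2 * enorm (u - xt j) ^+ 2)%:E)%E) ->
  (forall j, (y j.+1 = y j \/ y j.+1 = yt j.+1) /\
             (psi (y j.+1) <= psi (y j))%E /\
             (psi (y j.+1) <= psi (yt j.+1))%E) ->
  (forall j, x j.+1 = ((A j.+1 * mu + 1)^-1) *:
       ((L + mu) * a j *: yt j.+1 - (A j * a j * L / A j.+1) *: y j)) ->
  let gamt := fun j u => ((lin g dg (xt j) u)%:E + h u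
                          + (mu / 2 * enorm (u - xt j) ^+ 2)%:E)%E in
  let gam := fun j u => (gamt j (yt j.+1)
       + (L * dotv (xt j - yt j.+1) (u - yt j.+1)
          + mu / 2 * enorm (u - yt j.+1) ^+ 2)%:E)%E in
  forall Gam : nat -> 'rV[R]_n -> \bar R,
  (forall u, Gam 0%N u = 0%E) ->
  (forall j u, Gam j.+1 u =
       ((A j.+1)^-1%:E * ((A j)%:E * Gam j u + (a j)%:E * gam j u))%E) ->
  forall j u,
    ((A j)%:E * psi (y j) <= (A j)%:E * Gam j u + (1 / 2 * enorm (u - x0) ^+ 2)%:E)%E.
Proof.
move=> hmu hL hsc hsm hprop hclosed hconv psi hA0 htau0 hy0 hx0 ha htau hA hxt hmin
  hy hx gamt gam Gam hG0 hG.
have hninf : forall z, h z != -oo%E := hprop.1.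
have [z0 hz0] := hprop.2.
have hM : 0 < L + mu by lra.
have hsA : forall j, 0 <= A j /\ tau j = (1 + mu * A j) / L.
  elim=> [|j [hAj htj]]; first by rewrite hA0 htau0 mulr0 addr0.
  have [hap _] := @a_facts _ _ _ _ _ _ hL hmu hAj htj (ha j).
  rewrite hA htau htj; split; first lra.
  by field; rewrite gt_eqF.
have hAge : forall j, 0 <= A j by move=> j; case: (hsA j).
have hapos : forall j, 0 < a j.
  by move=> j; case: (hsA j) => h1 h2; case: (@a_facts _ _ _ _ _ _ hL hmu h1 h2 (ha j)).
have hasq : forall j, a j ^+ 2 * L = (A j + a j) * (1 + mu * A j).
  by move=> j; case: (hsA j) => h1 h2; case: (@a_facts _ _ _ _ _ _ hL hmu h1 h2 (ha j)).
have hfin : forall j, h (yt j.+1) \is a fin_num.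
  move=> j; rewrite fin_numE hninf /=; apply/negP => /eqP hinf.
  have := hmin j z0; rewrite hinf addey // addye // -(fineK hz0) -?EFinD.
  by rewrite leNgt ltey.
have hgamt_fin : forall j, gamt j (yt j.+1) \is a fin_num.
  by move=> j; rewrite /gamt -(fineK (hfin j)) -?EFinD.
pose c j := fine (gamt j (yt j.+1)).
have hgam : forall j u, gam j u = (c j + (L * dotv (xt j - yt j.+1) (u - yt j.+1)
    + mu / 2 * enorm (u - yt j.+1) ^+ 2))%:E.
  by move=> j u; rewrite /gam -(fineK (hgamt_fin j)) -?EFinD.
have hc : forall j, c j = lin g dg (xt j) (yt j.+1) + fine (h (yt j.+1))
    + mu / 2 * enorm (yt j.+1 - xt j) ^+ 2.
  by move=> j; rewrite /c /gamt -(fineK (hfin j)) -?EFinD.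
have hGfin : forall j u, Gam j u \is a fin_num.
  elim=> [|j IH] u; first by rewrite hG0.
  by rewrite hG hgam -(fineK (IH u)) -?EFinM -?EFinD -?EFinM.
pose G j u := fine (Gam j u).
have hGrec : forall j u, G j.+1 u = (A j.+1)^-1 * (A j * G j u + a j * (c j
    + (L * dotv (xt j - yt j.+1) (u - yt j.+1) + mu / 2 * enorm (u - yt j.+1) ^+ 2))).
  by move=> j u; rewrite /G hG hgam -(fineK (hGfin j u)) -?EFinM -?EFinD -?EFinM /=.
have hpsi_fin : forall j, psi (y j.+1) \is a fin_num.
  move=> j; have [_ [_ h2]] := hy j.
  rewrite /psi fin_numD /= fin_numE hninf /=; apply/negP => /eqP hinf.
  by move: h2; rewrite /psi hinf addey // -(fineK (hfin j)) -?EFinD leNgt ltey.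
pose P j := fine (psi (y j)).
have F1 : forall j, A j * (c j + (L * dotv (xt j - yt j.+1) (y j - yt j.+1)
    + mu / 2 * enorm (y j - yt j.+1) ^+ 2)) <= A j * P j.
  case=> [|k]; first by rewrite hA0 !mul0r.
  apply: ler_wpM2l; first exact: hAge.
  set v := y k.+1.
  have hp : (gam k.+1 v <= gamt k.+1 v)%E.
    exact: (@prox R n L mu g dg h (xt k.+1) (yt k.+2) hninf hconv (hfin k.+1) (hmin k.+1) v).
  have hsl := @sc_lower R n mu (L + mu) g dg (xt k.+1) v hM hsc hsm.
  have hpv := hpsi_fin k.
  have hhv : h v \is a fin_num.
    by move: hpv; rewrite /psi fin_numD => /andP[].
  rewrite /P -/v.
  move: hp; rewrite hgam /gamt /psi -(fineK hhv) -?EFinD lee_fin => hp.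
  rewrite /psi -(fineK hhv) -?EFinD /=.
  rewrite /lin in hp; lra.
have F2 : forall j, P j.+1 <= c j + L / 2 * enorm (yt j.+1 - xt j) ^+ 2.
  move=> j; have [_ [_ h2]] := hy j.
  have hd := @descent R n (L + mu) g dg (xt j) (yt j.+1) hM hsm.
  move: h2; rewrite /P -(fineK (hpsi_fin j)) /psi -(fineK (hfin j)) -?EFinD lee_fin => h2.
  rewrite hc /lin; rewrite /lin in hd; lra.
have Inv : forall j u, A j * P j + (1 + mu * A j) / 2 * dotv (u - x j) (u - x j)
    <= A j * G j u + 1 / 2 * dotv (u - x0) (u - x0).
  elim=> [|j IH] u; first by rewrite hA0 hx0 !mul0r mulr0 addr0 !add0r.
  have hAp : 0 < A j.+1 by rewrite hA; have := hapos j; have := hAge j; lra.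
  have eG : A j.+1 * G j.+1 u = A j * G j u + a j * (c j
    + (L * dotv (xt j - yt j.+1) (u - yt j.+1) + mu / 2 * enorm (u - yt j.+1) ^+ 2)).
    by rewrite hGrec; field; rewrite gt_eqF.
  have hxt' : xt j = (A j / (A j + a j)) *: y j + (a j / (A j + a j)) *: x j.
    by rewrite hxt hA.
  have hx' : x j.+1 = ((A j + a j) * mu + 1)^-1 *: ((L + mu) * a j *: yt j.+1
      - (A j * a j * L / (A j + a j)) *: y j).
    by rewrite hx hA.
  have hk := @key R n (A j) (a j) L mu u (y j) (x j) (yt j.+1) (xt j) (x j.+1)
    (hAge j) (hapos j) hmu hL (hasq j) hxt' hx'.
  have f1 := F1 j; have f2 := F2 j; have ih := IH u.
  have f2' : A j.+1 * P j.+1 <= A j.+1 * (c j + L / 2 * enorm (yt j.+1 - xt j) ^+ 2).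
    by apply: ler_wpM2l => //; apply: ltW.
  rewrite eG.
  rewrite !enorm_sq in f1 f2' eG hk *.
  rewrite hA in f2' hAp *.
  lra.
move=> j u.
case: j => [|k].
  rewrite hA0 !mul0e add0e lee_fin; apply: mulr_ge0; [lra | exact: sqr_ge0].
rewrite -(fineK (hpsi_fin k)) -(fineK (hGfin k.+1 u)) -!EFinM -?EFinD lee_fin.
have := Inv k.+1 u.
have hnn : 0 <= (1 + mu * A k.+1) / 2 * dotv (u - x k.+1) (u - x k.+1).
  apply: mulr_ge0; last exact: dotv_ge0.
  have := hAge k.+1; have : 0 <= mu * A k.+1 by apply: mulr_ge0; [apply: ltW | apply: hAge].
  lra.
rewrite enorm_sq /P /G; lra.
Qed.
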